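(* In the stochastic-follower setting, consider the greedy algorithm that at each round $t$ commits to $\mathbf{x}_t\in\arg\max_{\mathbf{x}\in\mathcal{E}_{\mathbf{z}_t}}\sum_{i=1}^K\widehat{p}_t(f_t=\alpha^{(i)})\,u(\mathbf{z}_t,\mathbf{x},b_{\alpha^{(i)}}(\mathbf{z}_t,\mathbf{x}))$, where $\widehat{p}_1(f=\alpha^{(i)})=\frac1K$ and $\widehat{p}_{t+1}(f=\alpha^{(i)})=\frac1t\sum_{\tau=1}^t\mathbb{1}\{f_\tau=\alpha^{(i)}\}$ for all $i\in[K]$ (i.e. the estimated distribution of the follower best response to $(\mathbf{z},\mathbf{x})$ is induced by the empirical distribution of observed types). Then its expected contextual Stackelberg regret satisfies $\mathbb{E}[R(T)]=O\big(K\sqrt{T\log T}\big)$.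
   Context: Game: finite leader actions $\mathcal{A}$, finite follower actions $\mathcal{A}_f$, contexts $\mathcal{Z}\subseteq\mathbb{R}^d$, follower types $\alpha^{(1)},\ldots,\alpha^{(K)}$ ($K\le T$) with known utilities $u_{\alpha^{(i)}}:\mathcal{Z}\times\mathcal{A}\times\mathcal{A}_f\to[0,1]$, known leader utility $u:\mathcal{Z}\times\mathcal{A}\times\mathcal{A}_f\to[0,1]$, mixed strategies $\mathbf{x}\in\Delta(\mathcal{A})$, $u(\mathbf{z},\mathbf{x},a_f)=\sum_{a_l}\mathbf{x}[a_l]u(\mathbf{z},a_l,a_f)$; best response $b_f(\mathbf{z},\mathbf{x})\in\arg\max_{a_f}\sum_{a_l}\mathbf{x}[a_l]u_f(\mathbf{z},a_l,a_f)$, ties broken by a fixed known ordering. Best-response regions $\mathcal{X}_{\mathbf{z}}(\sigma)=\{\mathbf{x}:b_{\alpha^{(i)}}(\mathbf{z},\mathbf{x})=\sigma(\alpha^{(i)})\ \forall i\}$ for $\sigma:\{\alpha^{(1)},\dots,\alpha^{(K)}\}\to\mathcal{A}_f$. $\mathcal{E}_{\mathbf{z}}$ is a set of $\delta$-approximate extreme points with $\delta\le 1/T$: for every $\sigma$ with $\mathcal{X}_{\mathbf{z}}(\sigma)\neq\emptyset$ and every extreme point $\mathbf{x}$ of $\mathrm{cl}(\mathcal{X}_{\mathbf{z}}(\sigma))$, either $\mathbf{x}\in\mathcal{X}_{\mathbf{z}}(\sigma)$ and $\mathbf{x}\in\mathcal{E}_{\mathbf{z}}$, or some $\mathbf{x}'\in\mathcal{E}_{\mathbf{z}}\cap\mathcal{X}_{\mathbf{z}}(\sigma)$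 has $\|\mathbf{x}'-\mathbf{x}\|_1\le\delta$. Stochastic-follower setting: $f_1,\ldots,f_T$ i.i.d. from an unknown distribution $\mathcal{F}$ over types; contexts chosen by a possibly adaptive adversary knowing $\mathcal{F}$, the algorithm and $f_1,\dots,f_{t-1}$ (not $f_t$) when choosing $\mathbf{z}_t$; the leader observes $f_t$ after round $t$. Expected regret $\mathbb{E}[R(T)]=\mathbb{E}_{f_1,\ldots,f_T\sim\mathcal{F}}\big[\sum_t u(\mathbf{z}_t,\pi^*(\mathbf{z}_t),b_{f_t}(\mathbf{z}_t,\pi^*(\mathbf{z}_t)))-u(\mathbf{z}_t,\mathbf{x}_t,b_{f_t}(\mathbf{z}_t,\mathbf{x}_t))\big]$ with $\pi^*$ the optimal policy (map $\mathcal{Z}\to\Delta(\mathcal{A})$) given $\mathbf{z}_1,\ldots,\mathbf{z}_T$ and $\mathcal{F}$. *)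

(* Defs.v *)
From mathcomp Require Import all_boot all_order all_algebra.
From mathcomp Require Import reals exp.
Set Implicit Arguments. Unset Strict Implicit. Unset Printing Implicit Defensive.
Import Order.TTheory GRing.Theory Num.Theory.
Local Open Scope ring_scope.

Section GameDefs.
Variables (R : realType) (d : nat) (A Af : finType).

Notation ctx := 'rV[R]_d.
Notation strat := {ffun A -> R}.

Definition mixed (x : strat) : Prop :=
  (forall a, 0 <= x a) /\ \sum_(a : A) x a = 1.

Definition Uexp (u : ctx -> A -> Af -> R) (z : ctx) (x : strat) (af : Af) : R :=
  \sum_(al : A) x al * u z al af.

(* Best response of a follower with utility uf: the first maximizer in the
   fixed tie-breaking order tb (a listing of Af); af0 is an irrelevant default
   (never used when tb lists all of Af, which is nonempty). *)
Definition br (tb : seq Af) (af0 : Af) (uf : ctx -> A -> Af -> R)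
    (z : ctx) (x : strat) : Af :=
  head af0 [seq a <- tb | [forall a' : Af, Uexp uf z x a' <= Uexp uf z x a]].

Definition l1 (x y : strat) : R := \sum_(a : A) `|x a - y a|.

Definition closure_l1 (S : strat -> Prop) (x : strat) : Prop :=
  forall e : R, 0 < e -> exists y, S y /\ l1 x y < e.

Definition extreme_point (C : strat -> Prop) (x : strat) : Prop :=
  C x /\ forall y w : strat, forall t : R, C y -> C w -> 0 < t -> t < 1 ->
    (forall a, x a = t * y a + (1 - t) * w a) -> y = w.

End GameDefs.

Section Regions.
Variables (R : realType) (d : nat) (A Af : finType) (K : nat).
Variables (tb : seq Af) (af0 : Af) (uf : 'I_K -> 'rV[R]_d -> A -> Af -> R).

Definition BRregion (z : 'rV[R]_d) (sigma : 'I_K -> Af) (x : {ffun A -> R}) : Prop :=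
  mixed x /\ forall i : 'I_K, br tb af0 (uf i) z x = sigma i.

Definition approx_extreme_points (delta : R) (z : 'rV[R]_d)
    (E : seq {ffun A -> R}) : Prop :=
  forall sigma : 'I_K -> Af,
    (exists x, BRregion z sigma x) ->
    forall x, extreme_point (closure_l1 (BRregion z sigma)) x ->
      (BRregion z sigma x /\ x \in E) \/
      (exists x', [/\ x' \in E, BRregion z sigma x' & l1 x' x <= delta]).

Definition phat (h : seq 'I_K) (i : 'I_K) : R :=
  if h is [::] then (K%:R)^-1 else (count (pred1 i) h)%:R / (size h)%:R.

Definition greedy_obj (u : 'rV[R]_d -> A -> Af -> R) (h : seq 'I_K)
    (z : 'rV[R]_d) (x : {ffun A -> R}) : R :=
  \sum_(i < K) phat h i * Uexp u z x (br tb af0 (uf i) z x).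

Definition exp_val (u : 'rV[R]_d -> A -> Af -> R) (F : 'I_K -> R)
    (z : 'rV[R]_d) (x : {ffun A -> R}) : R :=
  \sum_(i < K) F i * Uexp u z x (br tb af0 (uf i) z x).

(* realized regret on the type sequence s, for the algorithm alg (a function of
   the past types and the current context), the adaptive adversary adv
   (a function of the past types) and the benchmark policy pistar *)
Definition regret (T : nat) (u : 'rV[R]_d -> A -> Af -> R)
    (alg : seq 'I_K -> 'rV[R]_d -> {ffun A -> R})
    (adv : seq 'I_K -> 'rV[R]_d)
    (pistar : 'rV[R]_d -> {ffun A -> R}) (s : T.-tuple 'I_K) : R :=
  \sum_(t < T)
    let h := take t s in
    let z := adv h in
    let f := tnth s t in
    let x := alg h z in
    (Uexp u z (pistar z) (br tb af0 (uf f) z (pistar z))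
     - Uexp u z x (br tb af0 (uf f) z x)).

Definition expected_regret (T : nat) (F : 'I_K -> R) (u : 'rV[R]_d -> A -> Af -> R)
    (alg : seq 'I_K -> 'rV[R]_d -> {ffun A -> R})
    (adv : seq 'I_K -> 'rV[R]_d)
    (pistar : 'rV[R]_d -> {ffun A -> R}) : R :=
  \sum_(s : T.-tuple 'I_K) (\prod_(t < T) F (tnth s t)) * regret u alg adv pistar s.

End Regions.

(* Main.v *)
Require Import Defs.
From mathcomp Require Import all_boot all_order all_algebra.
From mathcomp Require Import reals exp.
From mathcomp Require Import ring lra.
From Stdlib Require Import Classical.
Import Order.TTheory GRing.Theory Num.Theory.
Local Open Scope ring_scope.
Set Implicit Arguments. Unset Strict Implicit. Unset Printing Implicit Defensive.

Section Ex.
Variables (R : realType) (K : nat) (F : 'I_K -> R).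
Hypothesis F0 : forall i, 0 <= F i.
Hypothesis F1 : \sum_(i < K) F i = 1.

Definition Ex n (G : seq 'I_K -> R) : R :=
  \sum_(s : n.-tuple 'I_K) (\prod_(t < n) F (tnth s t)) * G s.

Lemma Ex0 G : Ex 0 G = G [::].
Proof.
rewrite /Ex (big_pred1 [tuple]) => [|s]; last by apply/esym/eqP; exact: tuple0.
by rewrite big_ord0 mul1r.
Qed.

Lemma Ex_cons n G : Ex n.+1 G = \sum_(k < K) F k * Ex n (fun h => G (k :: h)).
Proof.
rewrite /Ex.
rewrite (reindex (fun p : 'I_K * n.-tuple 'I_K => [tuple of p.1 :: p.2])) /=; last first.
  exists (fun s : n.+1.-tuple 'I_K => (thead s, [tuple of behead s])) => [[k h] _|s _] /=.
    by congr pair; apply: val_inj.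
  by rewrite [RHS]tuple_eta.
rewrite -(pair_big xpredT xpredT (fun k (h : n.-tuple 'I_K) =>
   (\prod_(t < n.+1) F (tnth [tuple of k :: h] t)) * G (k :: h))) /=.
apply: eq_bigr => k _; rewrite big_distrr /=; apply: eq_bigr => h _.
rewrite big_ord_recl mulrA; congr (_ * _ * _).
apply: eq_bigr => t _.
by rewrite !(tnth_nth k) /=.
Qed.

Lemma Ex_ext n (G H : seq 'I_K -> R) : (forall s : n.-tuple 'I_K, G s = H s) -> Ex n G = Ex n H.
Proof. by move=> e; apply: eq_bigr => s _; rewrite e. Qed.

Lemma Ex_le n (G H : seq 'I_K -> R) : (forall s : n.-tuple 'I_K, G s <= H s) -> Ex n G <= Ex n H.
Proof.
move=> e; apply: ler_sum => s _; apply: ler_wpM2l; last exact: e.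
by apply: prodr_ge0 => t _; apply: F0.
Qed.

Lemma Ex_add n G H : Ex n (fun s => G s + H s) = Ex n G + Ex n H.
Proof. by rewrite /Ex -big_split; apply: eq_bigr => s _; rewrite mulrDr. Qed.

Lemma Ex_scale n c G : Ex n (fun s => c * G s) = c * Ex n G.
Proof. by rewrite /Ex big_distrr; apply: eq_bigr => s _; rewrite mulrCA. Qed.

Lemma Ex_sum n (I : finType) (G : I -> seq 'I_K -> R) :
  Ex n (fun s => \sum_(i : I) G i s) = \sum_(i : I) Ex n (G i).
Proof.
rewrite /Ex exchange_big; apply: eq_bigr => s _; by rewrite big_distrr.
Qed.

Lemma Ex_const n c : Ex n (fun _ => c) = c.
Proof.
elim: n => [|n IH]; first by rewrite Ex0.
rewrite Ex_cons; under eq_bigr do rewrite IH mulrC.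
by rewrite -big_distrr /= F1 mulr1.
Qed.

Lemma Ex_rcons n G : Ex n.+1 G = Ex n (fun h => \sum_(k < K) F k * G (rcons h k)).
Proof.
elim: n G => [|n IH] G.
  by rewrite Ex_cons Ex0; apply: eq_bigr => k _; rewrite Ex0.
rewrite Ex_cons [RHS]Ex_cons; apply: eq_bigr => j _; rewrite IH //.
Qed.

Lemma Ex_take m n G : (m <= n)%N -> Ex n (fun s => G (take m s)) = Ex m G.
Proof.
elim: n => [|n IH] lemn.
  by move: lemn; rewrite leqn0 => /eqP ->; apply: Ex_ext => s; rewrite take0 (tuple0 s).
case: (ltngtP m n.+1) lemn => // [lt|->] _; last first.
  by apply: Ex_ext => s; rewrite take_oversize // size_tuple.
rewrite Ex_rcons -IH //; apply: Ex_ext => s.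
under eq_bigr do rewrite -cats1 takel_cat ?size_tuple //.
by rewrite -big_distrl /= F1 mul1r.
Qed.


Lemma sum_ind i : \sum_(k < K) F k * (k == i)%:R = F i.
Proof.
rewrite (bigD1 i) //= eqxx mulr1 big1 ?addr0 // => k /negbTE ->.
by rewrite mulr0.
Qed.

Lemma var_step i (X : R) :
  \sum_(k < K) F k * ((X + (k == i)%:R) - F i)^+2 = X ^+ 2 + F i * (1 - F i).
Proof.
have e k : ((X + (k == i)%:R) - F i)^+2 =
   X^+2 * 1 + 2 * X * ((k == i)%:R - F i) + ((k == i)%:R * (1 - 2 * F i) + F i ^+ 2).
  by case: (k == i) => /=; ring.
under eq_bigr do rewrite e mulrDr mulrDr.
rewrite !big_split /=.
have h1 : \sum_(k < K) F k * (X ^+ 2 * 1) = X ^+ 2.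
  by rewrite -big_distrl /= F1; ring.
have h2 : \sum_(k < K) F k * (2 * X * ((k == i)%:R - F i)) = 0.
  under eq_bigr do rewrite mulrCA mulrBr.
  by rewrite -big_distrr /= sumrB sum_ind -big_distrl /= F1; ring.
have h3 : \sum_(k < K) F k * ((k == i)%:R * (1 - 2 * F i) + F i ^+ 2) =
    F i * (1 - 2 * F i) + F i ^+ 2.
  under eq_bigr do rewrite mulrDr mulrA.
  by rewrite big_split /= -!big_distrl /= sum_ind F1 mul1r.
rewrite h1 h2 h3; ring.
Qed.

Lemma Ex_var i n :
  Ex n (fun h => ((count (pred1 i) h)%:R - (size h)%:R * F i)^+2) = n%:R * (F i * (1 - F i)).
Proof.
elim: n => [|n IH]; first by rewrite Ex0 /= !mul0r subr0 expr0n /=.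
rewrite Ex_rcons.
rewrite (Ex_ext (H := fun h => ((count (pred1 i) h)%:R - (size h)%:R * F i)^+2 + F i * (1 - F i))).
  by rewrite Ex_add Ex_const IH -nat1r; ring.
move=> s; rewrite -var_step; apply: eq_bigr => k _.
rewrite -cats1 count_cat size_cat /= addn0 !natrD; congr (_ * _).
by rewrite eq_sym; ring.
Qed.

End Ex.

Section Poly.
Variables (R : realType) (A I : finType) (g : I -> {ffun A -> R}) (L : {ffun A -> R}).

Definition dot (c x : {ffun A -> R}) := \sum_a x a * c a.

Lemma dot_lin c (x y z : {ffun A -> R}) al be :
  (forall a, z a = al * x a + be * y a) -> dot c z = al * dot c x + be * dot c y.
Proof.
move=> e; rewrite /dot !big_distrr -big_split /=; apply: eq_bigr => a _.
by rewrite e; ring.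
Qed.

Lemma sum_lin (x y z : {ffun A -> R}) al be :
  (forall a, z a = al * x a + be * y a) -> \sum_a z a = al * \sum_a x a + be * \sum_a y a.
Proof.
move=> e; rewrite !big_distrr -big_split /=; apply: eq_bigr => a _.
by rewrite e.
Qed.

Definition PP (x : {ffun A -> R}) := \sum_a x a = 1 /\ forall i, dot (g i) x <= 0.

Definition NS (x : {ffun A -> R}) := [set i | dot (g i) x < 0].

Hypothesis Hbd : forall v : {ffun A -> R},
  \sum_a v a = 0 -> v != 0 -> exists i, 0 < dot (g i) v.

Lemma step2 p y w t : PP p -> PP y -> PP w -> 0 < t -> t < 1 ->
  (forall a, p a = t * y a + (1 - t) * w a) -> y <> w -> dot L w <= dot L y ->
  exists p', PP p' /\ (#|NS p'| < #|NS p|)%N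
     /\ dot L p <= dot L p'.
Proof.
move=> [sp Pp] [sy Py] [sw Pw] t0 t1 hp yw hL.
pose v : {ffun A -> R} := [ffun a => 1 * y a + (-1) * w a].
have dv c : dot c v = dot c y - dot c w.
  by rewrite (@dot_lin c y w v 1 (-1)) => [|a]; rewrite ?ffunE //; ring.
have sv : \sum_a v a = 0.
  by rewrite (@sum_lin y w v 1 (-1)) => [|a]; rewrite ?ffunE // sy sw; ring.
have vn0 : v != 0.
  apply/eqP => v0; apply: yw; apply/ffunP => a.
  have := congr1 (fun f : {ffun A -> R} => f a) v0; rewrite /= !ffunE; lra.
have tight i : dot (g i) p = 0 -> dot (g i) v = 0.
  move=> e; rewrite dv.
  have := @dot_lin (g i) y w p t (1 - t) hp; rewrite e => h.
  have := Py i; have := Pw i => hw hy.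
  have h1 : t * dot (g i) y <= 0 by rewrite pmulr_rle0.
  have h2 : (1 - t) * dot (g i) w <= 0 by rewrite pmulr_rle0 // subr_gt0.
  have ey : t * dot (g i) y = 0 by lra.
  have ew : (1 - t) * dot (g i) w = 0 by lra.
  move: ey ew => /eqP; rewrite mulf_eq0 gt_eqF //= => /eqP ->.
  have t1' : 0 < 1 - t by lra.
  move/eqP; rewrite mulf_eq0 (gt_eqF t1') /= => /eqP ->.
  by rewrite subrr.
have [i0 hi0] := Hbd sv vn0.
pose f i := - dot (g i) p / dot (g i) v.
case: (@arg_minP _ _ _ i0 (fun i => 0 < dot (g i) v) f hi0) => ist His Hmin.
pose lam := f ist.
have negp i : 0 < dot (g i) v -> dot (g i) p < 0.
  move=> h; rewrite lt_neqAle Pp andbT; apply/eqP => e.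
  by move: h; rewrite (tight i e) ltxx.
have lam0 : 0 <= lam.
  by rewrite /lam /f divr_ge0 // ?oppr_ge0 ?ltW // negp.
pose p' : {ffun A -> R} := [ffun a => 1 * p a + lam * v a].
have dp' c : dot c p' = dot c p + lam * dot c v.
  by rewrite (@dot_lin c p v p' 1 lam) ?mul1r // => a; rewrite ffunE.
exists p'; split; [split|split].
- by rewrite (@sum_lin p v p' 1 lam) => [|a]; rewrite ?ffunE // sp sv; ring.
- move=> i; rewrite dp'.
  case: (ltrP 0 (dot (g i) v)) => hv.
    have := Hmin i hv; rewrite -/lam /f ler_pdivlMr // => h; lra.
  have : lam * dot (g i) v <= 0 by rewrite mulr_ge0_le0.
  have := Pp i; lra.
- apply: proper_card; apply/properP; split.
    apply/subsetP => i; rewrite /NS !inE dp' => h.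
    rewrite lt_neqAle Pp andbT; apply/eqP => e.
    by move: h; rewrite e (tight i e) mulr0 addr0 ltxx.
  exists ist; first by rewrite /NS inE negp.
  rewrite /NS inE dp' /lam /f -mulrA mulVf ?gt_eqF // mulr1 addrN ltxx //.
- rewrite dp' -[X in X <= _]addr0 lerD2l mulr_ge0 // dv subr_ge0 //.
Qed.

Lemma exists_extreme p : PP p -> exists x, extreme_point PP x /\ dot L p <= dot L x.
Proof.
suff H : forall n p, PP p -> (#|NS p| <= n)%N ->
   exists x, extreme_point PP x /\ dot L p <= dot L x.
  by move=> Pp; apply: (H _ p Pp (leqnn _)).
elim=> [|n IH] {}p Pp hc.
  case: (classic (extreme_point PP p)) => [ex|nex]; first by exists p; split.
  exfalso.
  have [y [w [t [Py [Pw [t0 [t1 [hp yw]]]]]]]] : exists y w t, PP y /\ PP w /\ 0 < t /\ t < 1 /\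
      (forall a, p a = t * y a + (1 - t) * w a) /\ y <> w.
    apply: NNPP => H; apply: nex; split => // y w t Py Pw t0 t1 hp; apply: NNPP => hne.
    by apply: H; exists y, w, t.
  have t0' : 0 < 1 - t by lra.
  have t1' : 1 - t < 1 by lra.
  have hp' : forall a, p a = (1 - t) * w a + (1 - (1 - t)) * y a by move=> a; rewrite hp; ring.
  have [hL|hL'] := lerP (dot L w) (dot L y); last have hL := ltW hL'.
    have [p' [_ [hc' _]]] := step2 Pp Py Pw t0 t1 hp yw hL.
    by move: hc; rewrite leqn0 => /eqP e; rewrite e in hc'.
  have [p' [_ [hc' _]]] := @step2 p w y (1 - t) Pp Pw Py t0' t1' hp' (fun e => yw (esym e)) hL.
  by move: hc; rewrite leqn0 => /eqP e; rewrite e in hc'.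
case: (classic (extreme_point PP p)) => [ex|nex]; first by exists p; split.
have [y [w [t [Py [Pw [t0 [t1 [hp yw]]]]]]]] : exists y w t, PP y /\ PP w /\ 0 < t /\ t < 1 /\
    (forall a, p a = t * y a + (1 - t) * w a) /\ y <> w.
  apply: NNPP => H; apply: nex; split => // y w t Py Pw t0 t1 hp; apply: NNPP => hne.
  by apply: H; exists y, w, t.
have t0' : 0 < 1 - t by lra.
have t1' : 1 - t < 1 by lra.
have hp' : forall a, p a = (1 - t) * w a + (1 - (1 - t)) * y a by move=> a; rewrite hp; ring.
have fin : forall p', PP p' /\ (#|NS p'| < #|NS p|)%N
     /\ dot L p <= dot L p' -> exists x, extreme_point PP x /\ dot L p <= dot L x.
  move=> p' [Pp' [hc' hl]].
  have [x [ex hx]] := IH p' Pp' (leq_trans (leq_trans hc' hc) (leqnn _) : _ < n.+1)%N.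
  by exists x; split => //; apply: le_trans hx.
have [hL|hL'] := lerP (dot L w) (dot L y); last have hL := ltW hL'.
  have [p' H] := step2 Pp Py Pw t0 t1 hp yw hL.
  exact: fin p' H.
have [p' H] := @step2 p w y (1 - t) Pp Pw Py t0' t1' hp' (fun e => yw (esym e)) hL.
exact: fin p' H.
Qed.

End Poly.

Section BR.
Variables (T : eqType) (x0 : T).

Lemma head_before (P : pred T) s a : head x0 (filter P s) = a -> a \in filter P s ->
  forall b, (index b s < index a s)%N -> ~~ P b.
Proof.
elim: s => [|c s IH] //= hh; case: ifP hh => Pc /= hh.
  by move=> _ b; rewrite hh eqxx.
move=> ain b; case: ifP => [/eqP <-|cb]; first by rewrite Pc.
have ac : (c == a) = false.
  by apply/negbTE; apply: contraFN Pc => /eqP ->; move: ain; rewrite mem_filter => /andP [].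
by rewrite ac ltnS; apply: IH.
Qed.

Lemma head_char (P : pred T) s a : a \in s -> P a ->
  (forall b, (index b s < index a s)%N -> ~~ P b) -> head x0 (filter P s) = a.
Proof.
elim: s => [|c s IH] //=; rewrite in_cons => /orP [/eqP <-|ain] Pa H.
  by rewrite Pa.
case: ifP => [Pc|Pc] /=.
  case: (eqVneq c a) => // ca.
  by have := H c; rewrite /= eqxx (negbTE ca) => /(_ isT); rewrite Pc.
apply: IH => // b hb.
case: (eqVneq c b) => [<-|cb]; first by rewrite Pc.
case: (eqVneq c a) => [ca|ca]; first by rewrite ca Pa in Pc.
by apply: H; rewrite /= (negbTE cb) (negbTE ca) ltnS.
Qed.
End BR.

Section Game.
Variables (R : realType) (d : nat) (A Af : finType) (tb : seq Af) (af0 : Af).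
Hypothesis tbP : perm_eq tb (enum Af).
Notation ctx := 'rV[R]_d.
Notation strat := {ffun A -> R}.

Lemma Uexp_dot (uu : ctx -> A -> Af -> R) z x b :
  Uexp uu z x b = dot [ffun a => uu z a b] x.
Proof. by rewrite /Uexp /dot; apply: eq_bigr => a _; rewrite ffunE. Qed.

Lemma br_max (uu : ctx -> A -> Af -> R) z x a' :
  Uexp uu z x a' <= Uexp uu z x (br tb af0 uu z x).
Proof.
pose am := Order.arg_max af0 xpredT (Uexp uu z x).
have Pam : [forall a', Uexp uu z x a' <= Uexp uu z x am].
  rewrite /am; case: arg_maxP => // m _ Hm; apply/forallP => c; exact: Hm.
have : am \in [seq a <- tb | [forall a', Uexp uu z x a' <= Uexp uu z x a]].
  by rewrite mem_filter Pam (perm_mem tbP) mem_enum.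
rewrite /br; case E: [seq _ <- _ | _] => [|h s] //= _.
have : h \in [seq a <- tb | [forall a', Uexp uu z x a' <= Uexp uu z x a]].
  by rewrite E mem_head.
by rewrite mem_filter => /andP [/forallP H _]; apply: H.
Qed.

Lemma br_in (uu : ctx -> A -> Af -> R) z x :
  br tb af0 uu z x \in [seq a <- tb | [forall a', Uexp uu z x a' <= Uexp uu z x a]].
Proof.
rewrite /br; set s := [seq _ <- _ | _].
pose am := Order.arg_max af0 xpredT (Uexp uu z x).
have : am \in s.
  rewrite mem_filter (perm_mem tbP) mem_enum andbT.
  rewrite /am; case: arg_maxP => // m _ Hm; apply/forallP => c; exact: Hm.
case E: s => [|h s'] //= _.
by rewrite mem_head.
Qed.

Lemma l1_coord (x y : strat) a : `|x a - y a| <= l1 x y.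
Proof.
rewrite /l1 (bigD1 a) //= -[X in X <= _]addr0 lerD2l.
by apply: sumr_ge0 => b _.
Qed.

Lemma dot_l1 (c x y : strat) : (forall a, `|c a| <= 1) -> dot c x - dot c y <= l1 x y.
Proof.
move=> hc; rewrite /dot -sumrB /l1; apply: ler_sum => a _.
rewrite -mulrBl; apply: le_trans (ler_norm _) _.
by rewrite normrM; apply: ler_piMr => //; apply: hc.
Qed.

Lemma l1C (x y : strat) : l1 x y = l1 y x.
Proof. by rewrite /l1; apply: eq_bigr => a _; rewrite distrC. Qed.

Lemma cl_le (S : strat -> Prop) (phi : strat -> R) x :
  (forall y, S y -> phi y <= 0) -> (forall y, phi x - phi y <= l1 x y) ->
  closure_l1 S x -> phi x <= 0.
Proof.
move=> HS Hl Hc; case: (lerP (phi x) 0) => // hp.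
have [y [Sy hy]] := Hc _ hp.
have := HS y Sy; have := Hl y; lra.
Qed.


Section Region.
Variables (K : nat) (uf : 'I_K -> ctx -> A -> Af -> R) (z : ctx) (sigma : 'I_K -> Af).
Hypothesis ufb : forall i a b, 0 <= uf i z a b <= 1.

Definition gidx (j : A + ('I_K * Af)) : strat :=
  match j with
  | inl a => [ffun a' => - (a' == a)%:R]
  | inr (i, b) => [ffun a => uf i z a b - uf i z a (sigma i)]
  end.

Lemma dot_inl a x : dot (gidx (inl a)) x = - x a.
Proof.
rewrite /dot (bigD1 a) //= ffunE eqxx big1 => [|b /negbTE hb]; last by rewrite ffunE hb oppr0 mulr0.
by rewrite addr0 mulrN1.
Qed.

Lemma dot_inr i b x : dot (gidx (inr (i, b))) x = Uexp (uf i) z x b - Uexp (uf i) z x (sigma i).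
Proof. by rewrite /dot /Uexp -sumrB; apply: eq_bigr => a _; rewrite ffunE mulrBr. Qed.

Lemma gidx_bd j a : `|gidx j a| <= 1.
Proof.
case: j => [a'|[i b]] /=; rewrite ffunE.
  by case: (a == a') => /=; rewrite normrN ?mulr0n ?mulr1n ?normr0 ?normr1.
have := ufb i a b; have := ufb i a (sigma i) => /andP [h1 h2] /andP [h3 h4].
rewrite ler_norml; apply/andP; split; lra.
Qed.

Lemma PP_iff x : PP gidx x <-> mixed x /\ forall i b, Uexp (uf i) z x b <= Uexp (uf i) z x (sigma i).
Proof.
split.
  move=> [s H]; split; first split => //.
    by move=> a; have := H (inl a); rewrite dot_inl oppr_le0.
  by move=> i b; have := H (inr (i, b)); rewrite dot_inr subr_le0.
move=> [[H0 s] H]; split => // [[a|[i b]]].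
  by rewrite dot_inl oppr_le0.
by rewrite dot_inr subr_le0.
Qed.

Lemma Hbd_g (v : strat) : \sum_a v a = 0 -> v != 0 -> exists j, 0 < dot (gidx j) v.
Proof.
move=> s0 vn0; case: (classic (exists a, v a < 0)) => [[a ha]|H].
  by exists (inl a); rewrite dot_inl oppr_gt0.
have hge : forall a, 0 <= v a.
  by move=> a; case: (lerP 0 (v a)) => // h; exfalso; apply: H; exists a.
have := psumr_eq0P (fun a _ => hge a) s0 => h0.
have v0 : v = 0 by apply/ffunP => a; rewrite ffunE h0.
by rewrite v0 eqxx in vn0.
Qed.

Definition Reg := BRregion tb af0 uf z sigma.

Lemma region_PP x : Reg x -> PP gidx x.
Proof.
move=> [mx hb]; apply/PP_iff; split => // i b.
by rewrite -(hb i); apply: br_max.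
Qed.

Lemma sum_dot (x : strat) : \sum_a x a = dot [ffun=> 1] x.
Proof. by rewrite /dot; apply: eq_bigr => a _; rewrite ffunE mulr1. Qed.

Lemma closure_PP x : closure_l1 Reg x -> PP gidx x.
Proof.
move=> hc; split.
  have o1 : forall a, `|([ffun=> 1] : strat) a| <= 1 by move=> a; rewrite ffunE normr1.
  have h1 : \sum_a x a - 1 <= 0.
    apply: (@cl_le Reg (fun y => \sum_a y a - 1)) => // [y /region_PP [-> _]|y].
      by rewrite subrr.
    have := @dot_l1 [ffun=> 1] x y o1.
    by rewrite -!sum_dot; lra.
  have h2 : 1 - \sum_a x a <= 0.
    apply: (@cl_le Reg (fun y => 1 - \sum_a y a)) => // [y /region_PP [-> _]|y].
      by rewrite subrr.
    have := @dot_l1 [ffun=> 1] y x o1.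
    by rewrite -!sum_dot l1C; lra.
  lra.
move=> j; apply: (@cl_le Reg (fun y => dot (gidx j) y)) => // [y /region_PP [_ ->] //|y].
exact: dot_l1 (gidx_bd j).
Qed.


Lemma Uexp_lin (uu : ctx -> A -> Af -> R) (q p y : strat) al be c :
  (forall a, y a = al * q a + be * p a) ->
  Uexp uu z y c = al * Uexp uu z q c + be * Uexp uu z p c.
Proof. by move=> e; rewrite !Uexp_dot; apply: dot_lin. Qed.

Lemma PP_closure p q : Reg p -> PP gidx q -> closure_l1 Reg q.
Proof.
move=> [mp hp] /PP_iff [mq hq] e e0.
set D := l1 q p.
have D0 : 0 <= D by apply: sumr_ge0 => a _.
pose lam := e / (e + D + 1).
have den0 : 0 < e + D + 1 by lra.
have lam0 : 0 < lam by rewrite /lam divr_gt0.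
have lam1 : lam < 1 by rewrite /lam ltr_pdivrMr // mul1r; lra.
have lamD : lam * D < e.
  rewrite /lam mulrAC ltr_pdivrMr //.
  have : e * D < e * (e + D + 1) by rewrite ltr_pM2l //; lra.
  done.
pose y : strat := [ffun a => (1 - lam) * q a + lam * p a].
have hy a : y a = (1 - lam) * q a + lam * p a by rewrite ffunE.
exists y; split; last first.
  have -> : l1 q y = lam * D.
    rewrite /D /l1 big_distrr /=; apply: eq_bigr => a _.
    have -> : q a - y a = lam * (q a - p a) by rewrite hy; ring.
    by rewrite normrM gtr0_norm.
  done.
split.
  split.
    move=> a; rewrite hy; apply: addr_ge0; apply: mulr_ge0; try lra.
      by case: mq.
    by case: mp.
  rewrite (@sum_lin _ _ q p y (1 - lam) lam) // (proj2 mq) (proj2 mp); ring.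
move=> i.
have Up a' : Uexp (uf i) z p a' <= Uexp (uf i) z p (sigma i) by rewrite -(hp i); apply: br_max.
have lam1' : 0 < 1 - lam by lra.
rewrite /br; apply: head_char.
- by rewrite (perm_mem tbP) mem_enum.
- apply/forallP => a'; rewrite !(Uexp_lin _ _ hy).
  apply: lerD; first by apply: ler_wpM2l; [lra | apply: hq].
  by apply: ler_wpM2l; [lra | apply: Up].
- move=> b hb.
  have bi := br_in (uf i) z p; rewrite (hp i) in bi.
  have := @head_before _ af0 _ tb _ (hp i) bi b.
  move=> /(_ hb) /forallPn [a' ha'].
  rewrite -ltNge in ha'.
  have hlt : Uexp (uf i) z p b < Uexp (uf i) z p (sigma i) by apply: lt_le_trans ha' (Up a').
  apply/forallPn; exists (sigma i); rewrite -ltNge !(Uexp_lin _ _ hy).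
  apply: ler_ltD; first by apply: ler_wpM2l; [lra | apply: hq].
  by rewrite ltr_pM2l.
Qed.

End Region.
End Game.

Lemma sum_diff_le (R : realType) (I : finType) (a b c : I -> R) :
  (forall i, 0 <= c i <= 1) -> \sum_i (a i - b i) * c i <= \sum_i `|a i - b i|.
Proof.
move=> hc; apply: ler_sum => i _; have /andP [c0 c1] := hc i.
apply: le_trans (_ : `|a i - b i| * c i <= _).
  by apply: ler_wpM2r => //; apply: ler_norm.
by apply: ler_piMr.
Qed.

Section Round.
Variables (R : realType) (d : nat) (A Af : finType) (tb : seq Af) (af0 : Af).
Hypothesis tbP : perm_eq tb (enum Af).
Variables (K : nat) (uf : 'I_K -> 'rV[R]_d -> A -> Af -> R) (u : 'rV[R]_d -> A -> Af -> R)
  (z : 'rV[R]_d) (F : 'I_K -> R) (E : seq {ffun A -> R}) (delta : R).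
Hypothesis ub : forall a b, 0 <= u z a b <= 1.
Hypothesis ufb : forall i a b, 0 <= uf i z a b <= 1.
Hypothesis Emix : forall x, x \in E -> mixed x.
Hypothesis HE : approx_extreme_points tb af0 uf delta z E.
Hypothesis F0 : forall i, 0 <= F i.
Hypothesis F1 : \sum_i F i = 1.

Lemma Uexp_bd y b : mixed y -> 0 <= Uexp u z y b <= 1.
Proof.
move=> [y0 y1]; apply/andP; split.
  by apply: sumr_ge0 => a _; apply: mulr_ge0 => //; case/andP: (ub a b).
rewrite -y1; apply: ler_sum => a _; apply: ler_piMr => //; by case/andP: (ub a b).
Qed.

Lemma best_in_E p : mixed p -> exists x', x' \in E /\
  exp_val tb af0 uf u F z p <= exp_val tb af0 uf u F z x' + Num.max delta 0.
Proof.
move=> mp.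
pose sigma i := br tb af0 (uf i) z p.
have Rp : Reg tb af0 uf z sigma p by split.
pose L : {ffun A -> R} := [ffun a => \sum_i F i * u z a (sigma i)].
have dotL x : dot L x = \sum_i F i * Uexp u z x (sigma i).
  rewrite /dot /Uexp; under eq_bigr do rewrite ffunE big_distrr.
  rewrite exchange_big /=; apply: eq_bigr => i _; rewrite big_distrr /=.
  by apply: eq_bigr => a _; ring.
have Lbd a : `|L a| <= 1.
  rewrite ffunE ger0_norm; last by apply: sumr_ge0 => i _; apply: mulr_ge0 => //; case/andP: (ub a (sigma i)).
  rewrite -F1; apply: ler_sum => i _; apply: ler_piMr => //; by case/andP: (ub a (sigma i)).
have exp_reg x : Reg tb af0 uf z sigma x -> exp_val tb af0 uf u F z x = dot L x.
  by move=> [_ hx]; rewrite dotL /exp_val; apply: eq_bigr => i _; rewrite hx.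
have [xs [exs hxs]] := exists_extreme L (Hbd_g uf z sigma) (region_PP tbP Rp).
have excl : extreme_point (closure_l1 (Reg tb af0 uf z sigma)) xs.
  case: exs => Pxs H; split; first by move=> e e0; exact: (PP_closure tbP Rp Pxs e0).
  move=> y w t cy cw t0 t1 hxy; exact: (H y w t (closure_PP tbP ufb cy) (closure_PP tbP ufb cw) t0 t1 hxy).
have [[Rxs xsE]|[x' [x'E Rx' hl]]] := HE (ex_intro _ p Rp) excl.
  exists xs; split => //; rewrite (exp_reg _ Rp) (exp_reg _ Rxs).
  apply: le_trans hxs _; rewrite lerDl le_max lexx orbT //.
exists x'; split => //; rewrite (exp_reg _ Rp) (exp_reg _ Rx').
have := dot_l1 xs x' Lbd; rewrite l1C => h.
have : delta <= Num.max delta 0 by rewrite le_max lexx.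
lra.
Qed.

Lemma greedy_close h y : mixed y ->
  exp_val tb af0 uf u F z y - greedy_obj tb af0 uf u h z y <= \sum_i `|phat R h i - F i| /\
  greedy_obj tb af0 uf u h z y - exp_val tb af0 uf u F z y <= \sum_i `|phat R h i - F i|.
Proof.
move=> my; rewrite /exp_val /greedy_obj -!sumrB; split.
  under eq_bigr do rewrite -mulrBl.
  under [X in _ <= X]eq_bigr do rewrite distrC.
  by apply: sum_diff_le => i; apply: Uexp_bd.
under eq_bigr do rewrite -mulrBl.
by apply: sum_diff_le => i; apply: Uexp_bd.
Qed.

Lemma round_bound h p xa : mixed p -> xa \in E ->
  (forall y, y \in E -> greedy_obj tb af0 uf u h z y <= greedy_obj tb af0 uf u h z xa) ->
  exp_val tb af0 uf u F z p - exp_val tb af0 uf u F z xa <=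
    Num.max delta 0 + 2 * \sum_i `|phat R h i - F i|.
Proof.
move=> mp xaE hopt.
have [x' [x'E hx']] := best_in_E mp.
have [h1 _] := greedy_close h (Emix x'E).
have [_ h2] := greedy_close h (Emix xaE).
have := hopt _ x'E; lra.
Qed.

End Round.

Section NumFacts.
Variable R : realType.

Lemma ln_step (n : nat) : (1 <= n)%N -> (n.+1%:R : R)^-1 <= ln n.+1%:R - ln n%:R.
Proof.
move=> n1.
have np : (0 : R) < n%:R by rewrite ltr0n.
have n1p : (0 : R) < n.+1%:R by rewrite ltr0n.
have hx : -1 < - (n.+1%:R : R)^-1.
  rewrite ltrN2 invf_lt1 // ltr1n ltnS //.
have := le_ln1Dx hx.
have -> : 1 - (n.+1%:R : R)^-1 = n%:R / n.+1%:R.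
  rewrite -[n.+1]addn1 natrD; field; rewrite gt_eqF //; lra.
rewrite ln_div ?posrE //; move=> h; rewrite -opprB -lerN2 opprK; done.
Qed.

Lemma harm n : (1 <= n)%N -> \sum_(t < n.+1) (t%:R : R)^-1 <= 1 + ln n%:R.
Proof.
elim: n => [//|n IH] _.
case: n IH => [|n] IH.
  by rewrite !big_ord_recr big_ord0 /= ln1 invr0 !add0r invr1 addr0.
rewrite big_ord_recr /=.
have h2 := IH isT; have h1 := @ln_step n.+1 isT; apply: le_trans (lerD h2 h1) _; lra.
Qed.

Lemma ln2_ge : (1 / 2 : R) <= ln 2.
Proof.
have hx : (-1 : R) < - (1 / 2) by lra.
have := le_ln1Dx hx.
have -> : 1 - (1 / 2 : R) = 2^-1 by field.
rewrite lnV ?posrE //; lra.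
Qed.

Lemma lnT_ge (T : nat) : (2 <= T)%N -> (1 / 2 : R) <= ln T%:R.
Proof.
move=> T2; apply: le_trans ln2_ge _.
by rewrite ler_ln ?posrE ?ler_nat // ltr0n (leq_trans _ T2).
Qed.

End NumFacts.

Lemma amgm (R : realType) (x e : R) : 0 < e -> `|x| <= (x ^+ 2 / e + e) / 2.
Proof.
move=> e0.
have h : 0 <= (`|x| - e) ^+ 2 by apply: sqr_ge0.
have hx : x ^+ 2 = `|x| ^+ 2 by rewrite real_normK ?num_real.
rewrite hx.
have -> : (`|x| ^+ 2 / e + e) / 2 = (`|x| ^+ 2 + e ^+ 2) / (2 * e) by field; rewrite gt_eqF.
rewrite ler_pdivlMr ?mulr_gt0 //.
move: h; rewrite sqrrB; lra.
Qed.

Lemma conc (R : realType) K (F : 'I_K -> R) (F0 : forall i, 0 <= F i) (F1 : \sum_i F i = 1)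
  (t : nat) (ht : (1 <= t)%N) (eps : R) (e0 : 0 < eps) (i : 'I_K) :
  Ex F t (fun h => `|phat R h i - F i|) <= (F i / (t%:R * eps) + eps) / 2.
Proof.
have tp : (0 : R) < t%:R by rewrite ltr0n.
pose c1 := (2 * t%:R ^+ 2 * eps)^-1.
apply: le_trans (@Ex_le _ _ _ F0 t _
   (fun h => c1 * ((count (pred1 i) h)%:R - (size h)%:R * F i)^+2 + eps / 2) _) _.
  move=> s; rewrite size_tuple.
  have -> : phat R s i = (count (pred1 i) s)%:R / t%:R.
    by move: (size_tuple s); case: s => [[|a s'] hs] /= e; [rewrite -e in ht | rewrite e].
  set c := (count (pred1 i) s)%:R.
  apply: le_trans (amgm (c / t%:R - F i) e0) _.
  rewrite le_eqVlt; apply/orP; left; apply/eqP.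
  rewrite /c1; field; rewrite ?gt_eqF //.
rewrite Ex_add Ex_const.
have := Ex_scale F t c1 (fun h => ((count (pred1 i) h)%:R - (size h)%:R * F i)^+2).
rewrite /= => ->; rewrite Ex_var //.
rewrite /c1.
rewrite /c1.
have -> : (2 * t%:R ^+ 2 * eps)^-1 * (t%:R * (F i * (1 - F i))) = (F i * (1 - F i)) / (t%:R * eps) / 2.
  by field; rewrite !gt_eqF.
have : F i * (1 - F i) / (t%:R * eps) <= F i / (t%:R * eps).
  rewrite ler_pM2r ?invr_gt0 ?mulr_gt0 //.
  have := F0 i; nra.
lra.
exact: F1.
Qed.

Unset Implicit Arguments.

Theorem mainTheorem4 (R : realType) :
  exists C : R, 0 < C /\ exists T0 : nat,
  forall (d : nat) (A Af : finType) (tb : seq Af) (af0 : Af) (K : nat)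
    (Zs : 'rV[R]_d -> Prop)
    (u : 'rV[R]_d -> A -> Af -> R) (uf : 'I_K -> 'rV[R]_d -> A -> Af -> R)
    (T : nat) (delta : R) (E : 'rV[R]_d -> seq {ffun A -> R})
    (F : 'I_K -> R)
    (alg : seq 'I_K -> 'rV[R]_d -> {ffun A -> R})
    (adv : seq 'I_K -> 'rV[R]_d)
    (pistar : 'rV[R]_d -> {ffun A -> R}),
  perm_eq tb (enum Af) ->
  (0 < K)%N -> (K <= T)%N -> (T0 <= T)%N ->
  (forall z a b, Zs z -> 0 <= u z a b <= 1) ->
  (forall i z a b, Zs z -> 0 <= uf i z a b <= 1) ->
  delta <= (T%:R)^-1 ->
  (forall z, Zs z -> forall x, x \in E z -> mixed x) ->
  (forall z, Zs z -> approx_extreme_points tb af0 uf delta z (E z)) ->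
  (forall i, 0 <= F i) -> \sum_(i < K) F i = 1 ->
  (forall h, Zs (adv h)) ->
  (forall h z, Zs z ->
     alg h z \in E z /\
     forall y, y \in E z -> greedy_obj tb af0 uf u h z y <= greedy_obj tb af0 uf u h z (alg h z)) ->
  (forall z, Zs z ->
     mixed (pistar z) /\
     forall x, mixed x -> exp_val tb af0 uf u F z x <= exp_val tb af0 uf u F z (pistar z)) ->
  expected_regret tb af0 uf T F u alg adv pistar
    <= C * K%:R * Num.sqrt (T%:R * ln (T%:R)).
Proof.
exists 9; split; first lra.
exists 2%N.
move=> d A Af tb af0 K Zs u uf T delta E F alg adv pistar tbP HK KT T2 Hu Huf Hdel HEm HEap
  F0 F1 Hadv Halg Hpi.
have T1 : (1 <= T)%N by apply: leq_trans T2.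
have Tp : (0 : R) < T%:R by rewrite ltr0n.
have Kp : (1 : R) <= K%:R by rewrite ler1n.
pose m := Num.max delta 0.
have m0 : 0 <= m by rewrite le_max lexx orbT.
have mT : m <= T%:R^-1 by rewrite ge_max Hdel invr_ge0 ltW.
pose x0 : 'I_K := Ordinal HK.
pose Q h := exp_val tb af0 uf u F (adv h) (pistar (adv h)) -
            exp_val tb af0 uf u F (adv h) (alg h (adv h)).
pose Dt (h : seq 'I_K) (f : 'I_K) :=
  Uexp u (adv h) (pistar (adv h)) (br tb af0 (uf f) (adv h) (pistar (adv h))) -
  Uexp u (adv h) (alg h (adv h)) (br tb af0 (uf f) (adv h) (alg h (adv h))).
have stepA : expected_regret tb af0 uf T F u alg adv pistar = \sum_(t < T) Ex F t Q.
  rewrite /expected_regret /regret.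
  under eq_bigr do rewrite big_distrr.
  rewrite exchange_big /=; apply: eq_bigr => t _.
  transitivity (Ex F T (fun s => Dt (take t (take t.+1 s)) (nth x0 (take t.+1 s) t))).
    apply: eq_bigr => s _; rewrite /Dt (tnth_nth x0) /=.
    by rewrite take_takel ?nth_take // leqnSn.
  have := Ex_take F1 (fun h => Dt (take t h) (nth x0 h t)) (ltn_ord t).
  rewrite /= => ->; rewrite Ex_rcons; apply: Ex_ext => s.
  rewrite /Q /Dt /exp_val -sumrB; apply: eq_bigr => k _.
  rewrite -cats1 take_size_cat ?size_tuple // nth_cat size_tuple ltnn subnn /=.
  by rewrite mulrBr.
have stepB : forall t : 'I_T,
    Ex F t Q <= m + 2 * \sum_i Ex F t (fun h => `|phat R h i - F i|).
  move=> t.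
  apply: le_trans (@Ex_le _ _ _ F0 t _ (fun h => m + 2 * \sum_i `|phat R h i - F i|) _) _.
    move=> s; have hz := Hadv s; have [xE xopt] := Halg s _ hz; have [mp _] := Hpi _ hz.
    exact: (round_bound tbP (fun a b => Hu _ a b hz) (fun i a b => Huf i _ a b hz)
      (HEm _ hz) (HEap _ hz) F0 F1 mp xE xopt).
  rewrite Ex_add Ex_const //.
  have := Ex_scale F t 2 (fun h => \sum_i `|phat R h i - F i|); rewrite /= => ->.
  have := Ex_sum F t (fun i h => `|phat R h i - F i|); rewrite /= => ->.
  done.
pose s : R := Num.sqrt (T%:R * ln (T%:R : R)).
have lnT := lnT_ge R T2.
have T2r : (2 : R) <= T%:R by rewrite ler_nat.
have TL : 1 <= T%:R * ln (T%:R : R).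
  have : 2 * (1/2) <= T%:R * ln (T%:R : R) by apply: ler_pM => //; lra.
  lra.
have s1 : 1 <= s by rewrite -sqrtr1 /s; apply: ler_wsqrtr.
have s2 : s ^+ 2 = T%:R * ln (T%:R : R) by rewrite /s sqr_sqrtr //; lra.
pose eps := s / T%:R.
have eps0 : 0 < eps by rewrite /eps divr_gt0 //; lra.
have stepC : forall t : 'I_T, Ex F t Q <=
    m + 4 * (nat_of_ord t == 0%N)%:R + (nat_of_ord t)%:R^-1 / eps + K%:R * eps.
  move=> t; apply: le_trans (stepB t) _.
  case: (posnP t) => [t0|tpos].
    rewrite t0 /= invr0 mul0r addr0.
    have : \sum_i Ex F 0 (fun h => `|phat R h i - F i|) <= 2.
      under eq_bigr do rewrite Ex0 /=.
      apply: le_trans (_ : \sum_i (K%:R^-1 + F i) <= _).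
        apply: ler_sum => i _; apply: le_trans (ler_normB _ _) _.
        by rewrite ger0_norm ?invr_ge0 // ger0_norm.
      rewrite big_split /= F1 sumr_const card_ord -(mulr_natr ((K%:R : R)^-1) K) mulVf ?gt_eqF ?ltr0n //.
    move=> hs.
    have hk : 0 <= K%:R * eps by apply: mulr_ge0 => //; lra.
    apply: (@le_trans _ _ (m + 2 * 2)); first by rewrite lerD2l ler_wpM2l.
    lra.
  rewrite mulr0 addr0.
  apply: le_trans (_ : m + 2 * \sum_i (F i / ((nat_of_ord t)%:R * eps) + eps) / 2 <= _).
    rewrite lerD2l ler_wpM2l //; apply: ler_sum => i _; exact: conc.
  rewrite -big_distrl /= big_split /= -big_distrl /= F1 sumr_const card_ord -(mulr_natl eps K).
  have tp : (0 : R) < (nat_of_ord t)%:R by rewrite ltr0n.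
  rewrite mul1r invfM.

  lra.
rewrite stepA.
apply: le_trans (ler_sum _ (fun t _ => stepC t)) _.
rewrite !big_split /= !sumr_const card_ord -(mulr_natl m T) -(mulr_natl (K%:R * eps) T).
have H4 : \sum_(t < T) 4 * ((nat_of_ord t == 0%N)%:R : R) = 4.
  rewrite (bigD1 (Ordinal T1)) //= mulr1 big1 ?addr0 // => j hj.
  suff -> : (nat_of_ord j == 0%N) = false by rewrite mulr0.
  by apply: contraNF hj => /eqP h; apply/eqP/val_inj.
rewrite H4 -big_distrl /=.
have HS : \sum_(t < T) ((nat_of_ord t)%:R^-1 : R) <= 1 + ln (T%:R : R).
  apply: le_trans (harm R T1); rewrite big_ord_recr /= lerDl invr_ge0 //.
have h1 : T%:R * m <= 1.
  by have := ler_wpM2l (ltW Tp) mT; rewrite mulfV ?gt_eqF.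
have epsinv : eps^-1 = T%:R / s by rewrite /eps invf_div.
have s0 : 0 < s by lra.
have h2 : (\sum_(t < T) ((nat_of_ord t)%:R^-1 : R)) / eps <= 3 * s.
  rewrite epsinv.
  apply: le_trans (_ : (1 + ln (T%:R : R)) * (T%:R / s) <= _).
    by apply: ler_wpM2r => //; rewrite divr_ge0 //; lra.
  apply: le_trans (_ : 3 * ln (T%:R : R) * (T%:R / s) <= _).
    by apply: ler_wpM2r; [rewrite divr_ge0 //; lra | lra].
  have -> : 3 * ln (T%:R : R) * (T%:R / s) = 3 * (T%:R * ln (T%:R : R)) / s by field; rewrite gt_eqF.
  by rewrite -s2 expr2 mulrA mulfK ?gt_eqF.
have h3 : T%:R * (K%:R * eps) = K%:R * s by rewrite /eps; field; rewrite gt_eqF.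
rewrite h3.
have Ks : s <= K%:R * s by rewrite ler_peMl //; lra.
have -> : 9 * K%:R * s = 9 * (K%:R * s) by ring.
lra.
Qed.
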